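(* Let $n\ge 4$ and let $L$ be an $n$-bow, i.e. a generic length vector satisfying the strict triangle inequality such that $\{n,i\}$ is long for every $i=1,\dots,n-1$. Then $\Gamma(L)$ has exactly $2^{n-1}-2$ vertices, and this is the minimal number of vertices of $\Gamma(L')$ over all generic length vectors $L'\in\mathbb{R}_{>0}^n$ satisfying the strict triangle inequality.
   Context: Let $n\ge 4$ and $L=(l_1,\dots,l_n)$ be positive reals with $l_i<\sum_{j\ne i}l_j$ for every $i$ (strict triangle inequality), and generic: there is no $J\subseteq[n]$ with $\sum_{i\in J}l_i=\sum_{i\notin J}l_i$. Here $[n]=\{1,\dots,n\}$ and $|L|=\sum_{i=1}^n l_i$. A set $I\subseteq[n]$ is short if $\sum_{i\in I}l_i<|L|/2$ and long otherwise. A cyclically ordered partition of $[n]$ into $k$ parts is a sequence $(A_1,\dots,A_k)$ of pairwise disjoint nonempty sets with union $[n]$, considered up to cyclic shifts $(A_1,\dots,A_k)\sim(A_2,\dots,A_k,A_1)$; there is no ordering inside a part. It is admissible if every part is short. The graph $\Gamma(L)$ has as vertices the admissible cyclically ordered partitions of $[n]$ into 3 parts, written $(I,J,K)$, and as edges the admissible cyclically ordered partitions into 4 parts $(A,B,C,D)$; such an edge is incident to each of the partitions $(A\cup B,C,D)$, $(A,B\cup C,D)$, $(A,B,C\cup D)$, $(D\cup A,B,C)$ that is admissible. Equivalently, two vertices are adjacent iff one is obtained from the other by moving a nonempty proper subset of one part into another part. *)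

(* Defs.v *)
(* Length vectors L : 'I_n -> R over an arbitrary real field R
   (the paper's R is the real numbers; the statement is order-algebraic). *)
From HB Require Import structures.
From mathcomp Require Import all_boot all_order all_algebra.
Set Implicit Arguments. Unset Strict Implicit. Unset Printing Implicit Defensive.
Import Order.TTheory GRing.Theory Num.Theory.
Local Open Scope ring_scope.

Section Linkages.
Variables (R : realFieldType) (n : nat).
Implicit Types (L : 'I_n -> R) (I : {set 'I_n}).

Definition totlen L : R := \sum_(i < n) L i.
Definition slen L I : R := \sum_(i in I) L i.

Definition positive_lengths L : Prop := forall i, 0 < L i.
Definition strict_triangle L : Prop :=
  forall i : 'I_n, L i < \sum_(j < n | j != i) L j.
Definition generic L : Prop := forall J : {set 'I_n}, slen L J != slen L (~: J).

Definition short L I : bool := slen L I < totlen L / 2%:R.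
Definition long L I : bool := ~~ short L I.

Definition triple := ({set 'I_n} * {set 'I_n} * {set 'I_n})%type.

Definition is_part3 (t : triple) : bool :=
  let: (A, B, C) := t in
  [&& A != set0, B != set0, C != set0,
      [disjoint A & B], [disjoint B & C], [disjoint A & C] &
      A :|: B :|: C == [set: 'I_n]].

Definition admissible3 L (t : triple) : bool :=
  let: (A, B, C) := t in [&& short L A, short L B & short L C].

Definition cshift (t : triple) : triple :=
  let: (A, B, C) := t in (B, C, A).

Definition cyc_class (t : triple) : {set triple} :=
  [set t; cshift t; cshift (cshift t)].

(* Vertices of Gamma(L): admissible cyclically ordered partitions of [n]
   into 3 parts, i.e. classes of admissible ordered 3-partitions up to
   cyclic shift. *)
Definition Gamma_vertices L : {set {set triple}} :=
  [set cyc_class t | t in [set t : triple | is_part3 t && admissible3 L t]].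

(* n-bow: {n, i} is long for every i = 1..n-1 (index n is the element of
   'I_n with value n-1) *)
Definition is_bow L : Prop :=
  forall i j : 'I_n, nat_of_ord j = n.-1 -> i != j -> long L [set i; j].

End Linkages.

(* Main.v *)
Require Import Defs.
From HB Require Import structures.
From mathcomp Require Import all_boot all_order all_algebra.
From mathcomp Require Import ring lra zify.
Import Order.TTheory GRing.Theory Num.Theory.
Set Implicit Arguments. Unset Strict Implicit. Unset Printing Implicit Defensive.

Local Open Scope ring_scope.

Lemma slen_C (R : realFieldType) n (L : 'I_n -> R) (I : {set 'I_n}) :
  totlen L = slen L I + slen L (~: I).
Proof.
rewrite /totlen /slen (bigID (mem I)) /=; congr (_ + _).
by apply: eq_bigl => i; rewrite inE.
Qed.

Lemma slen_sub (R : realFieldType) n (L : 'I_n -> R) (I J : {set 'I_n}) :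
  positive_lengths L -> I \subset J -> slen L I <= slen L J.
Proof.
move=> hp sIJ; rewrite /slen [X in _ <= X](big_setID I) /=.
rewrite (setIidPr sIJ) lerDl; apply: sumr_ge0 => i _; exact: ltW.
Qed.

Lemma short_C (R : realFieldType) n (L : 'I_n -> R) (I : {set 'I_n}) :
  generic L -> short L (~: I) = ~~ short L I.
Proof.
move=> hg; rewrite /short; have := slen_C L I; have := hg I.
move: (slen L I) (slen L (~:I)) (totlen L) => a b T hab hT.
case: (ltgtP a b) => h; last by rewrite h eqxx in hab.
- have h1 : a < T / 2%:R by lra.
  have h2 : ~~ (b < T / 2%:R) by rewrite -leNgt; lra.
  by rewrite h1 (negbTE h2).
- have h1 : b < T / 2%:R by lra.
  have h2 : ~~ (a < T / 2%:R) by rewrite -leNgt; lra.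
  by rewrite h1 h2.
Qed.

Lemma short_sub (R : realFieldType) n (L : 'I_n -> R) (I J : {set 'I_n}) :
  positive_lengths L -> I \subset J -> short L J -> short L I.
Proof. move=> hp sIJ; rewrite /short; apply: le_lt_trans; exact: slen_sub. Qed.

Lemma long_sup (R : realFieldType) n (L : 'I_n -> R) (I J : {set 'I_n}) :
  positive_lengths L -> I \subset J -> long L I -> long L J.
Proof. move=> hp sIJ; rewrite /long; apply: contra; exact: short_sub. Qed.

Lemma short_set1 (R : realFieldType) n (L : 'I_n -> R) i :
  strict_triangle L -> short L [set i].
Proof.
move=> ht; rewrite /short /slen /totlen big_set1 (bigD1 i) //=.
have := ht i; move: (L i) (\sum_(j < n | j != i) L j) => a b h; lra.
Qed.

Lemma long_disj (R : realFieldType) n (L : 'I_n -> R) (I J : {set 'I_n}) :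
  positive_lengths L -> generic L -> [disjoint I & J] -> long L I -> long L J -> False.
Proof.
move=> hp hg dIJ lI lJ.
have : long L (~: I).
  apply: long_sup lJ => //; by rewrite -disjoints_subset disjoint_sym.
by rewrite /long short_C // negbK => sI; rewrite /long sI in lI.
Qed.

Definition Fs (R : realFieldType) n (L : 'I_n -> R) (P Q : {set 'I_n}) : {set triple n} :=
  [set t : triple n | [&& is_part3 t, admissible3 L t, P \subset t.1.1 & Q \subset t.1.2]].

Definition Dset n (Rs : {set 'I_n}) : {set {set 'I_n}} :=
  [set S : {set 'I_n} | [&& S \subset Rs, S != set0 & S != Rs]].

Lemma card_Dset n (Rs : {set 'I_n}) : #|Dset Rs| = (2 ^ #|Rs| - 2)%N.
Proof.
have -> : Dset Rs = powerset Rs :\: [set set0; Rs].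
  apply/setP => S; rewrite !inE.
  by case: (S \subset Rs); rewrite ?andbF // andbT negb_or.
rewrite cardsD (setIidPr _); last first.
  by apply/subsetP => S; rewrite !inE => /orP [] /eqP ->; rewrite ?sub0set.
rewrite card_powerset cards2; case: eqP => [<-|_] //.
by rewrite cards0.
Qed.


Lemma disjointP (T : finType) (A B : {set T}) :
  reflect (forall x, x \in A -> x \in B -> False) [disjoint A & B].
Proof.
rewrite disjoints_subset; apply: (iffP subsetP) => h x.
- by move=> xA xB; have := h x xA; rewrite inE xB.
- by move=> xA; rewrite inE; apply/negP; exact: h x xA.
Qed.

Lemma part3E n (A B C : {set 'I_n}) :
  is_part3 (A, B, C) = [&& A != set0, B != set0, C != set0 &
     [forall x, ((x \in A) + (x \in B) + (x \in C) == 1)%N]].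
Proof.
rewrite /is_part3; do 3 (case: (_ != set0) => //=).
apply/idP/forallP.
- case/and4P => /disjointP dAB /disjointP dBC /disjointP dAC /eqP /setP hU x.
  have := hU x; rewrite !inE.
  case xA: (x \in A); case xB: (x \in B); case xC: (x \in C) => //=.
  + by have := dAB x xA xB.
  + by have := dAB x xA xB.
  + by have := dAC x xA xC.
  + by have := dBC x xB xC.
- move=> h; apply/and4P; split.
  + by apply/disjointP => x xA xB; have := h x; rewrite xA xB; case: (x \in C).
  + by apply/disjointP => x xB xC; have := h x; rewrite xB xC; case: (x \in A).
  + by apply/disjointP => x xA xC; have := h x; rewrite xA xC; case: (x \in B).
  + apply/eqP/setP => x; have := h x; rewrite !inE.
    by case: (x \in A); case: (x \in B); case: (x \in C).
Qed.

Lemma part3_swap12 n (A B C : {set 'I_n}) : is_part3 (B, A, C) = is_part3 (A, B, C).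
Proof.
rewrite !part3E; case: (A != set0); case: (B != set0); case: (C != set0) => //=.
by apply/forallP/forallP => h x; have := h x; rewrite (addnC (x \in A)).
Qed.

Lemma part3_swap23 n (A B C : {set 'I_n}) : is_part3 (A, C, B) = is_part3 (A, B, C).
Proof.
rewrite !part3E; case: (A != set0); case: (B != set0); case: (C != set0) => //=.
by apply/forallP/forallP => h x; have := h x; rewrite -!addnA (addnC (x \in B)).
Qed.

Lemma part3_cs n (A B C : {set 'I_n}) : is_part3 (B, C, A) = is_part3 (A, B, C).
Proof.
rewrite !part3E; case: (A != set0); case: (B != set0); case: (C != set0) => //=.
by apply/forallP/forallP => h x; have := h x; case: (x \in A); case: (x \in B); case: (x \in C).
Qed.

Lemma part3_count n (A B C : {set 'I_n}) x :
  is_part3 (A, B, C) -> ((x \in A) + (x \in B) + (x \in C) = 1)%N.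
Proof. by rewrite part3E => /and4P [_ _ _ /forallP h]; apply/eqP. Qed.

Lemma forcedA_sub (R : realFieldType) n (L : 'I_n -> R) (P Q : {set 'I_n}) :
  positive_lengths L -> generic L -> P != set0 -> [disjoint P & Q] -> short L P ->
  (forall c, c \in ~: (P :|: Q) -> long L (c |: P)) ->
  [set (P, Q :|: S, ~: (P :|: Q) :\: S) | S in Dset (~: (P :|: Q))] \subset Fs L P Q.
Proof.
move=> hp hg hP dPQ sP hl; apply/subsetP => t /imsetP [S]; rewrite inE.
move=> /and3P [sS nS0 nSR] ->.
have hD : ~: (P :|: Q) :\: S != set0.
  by rewrite setD_eq0; apply: contra nSR => h; rewrite eqEsubset sS h.
rewrite inE; apply/and4P; split; [ | | by rewrite /= subxx | by rewrite /= subsetUl].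
- rewrite part3E hP hD setU_eq0 negb_and nS0 orbT /=.
  apply/forallP => x; have hSx := subsetP sS x; rewrite !inE in hSx *.
  have hPQ := @disjointFr _ _ _ x dPQ.
  case xP: (x \in P); case xQ: (x \in Q); case xS: (x \in S) => //=;
    try (by rewrite hPQ in xQ); by move: (hSx xS); rewrite xP xQ.
- rewrite /admissible3 sP /=; apply/andP; split.
  + have /set0Pn [c] := hD; rewrite inE => /andP [cS cR].
    rewrite -[short L (Q :|: S)]negbK -short_C //.
    apply: (long_sup hp _ (hl c cR)); apply/subsetP => x; rewrite !inE.
    case/orP => [/eqP -> | xP].
    * by move: cR; rewrite !inE negb_or => /andP [_ cQ]; rewrite negb_or cQ cS.
    * rewrite negb_or (disjointFr dPQ xP) /=; apply/negP => xS.
      by move: (subsetP sS x xS); rewrite !inE xP.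
  + have /set0Pn [c cS] := nS0.
    have cR := subsetP sS c cS.
    rewrite -[short L _]negbK -short_C //.
    apply: (long_sup hp _ (hl c cR)); apply/subsetP => x; rewrite !inE.
    case/orP => [/eqP -> | xP]; first by rewrite cS.
    by rewrite xP andbF.
Qed.

Lemma forcedA (R : realFieldType) n (L : 'I_n -> R) (P Q : {set 'I_n}) :
  positive_lengths L -> generic L -> P != set0 -> [disjoint P & Q] -> short L P ->
  (forall c, c \in ~: (P :|: Q) -> long L (c |: P)) ->
  (2 ^ #|~: (P :|: Q)| - 2 <= #|Fs L P Q|)%N.
Proof.
move=> hp hg hP dPQ sP hl.
rewrite -card_Dset -(@card_in_imset _ _ (fun S => (P, Q :|: S, ~: (P :|: Q) :\: S))).
  exact: subset_leq_card (forcedA_sub hp hg hP dPQ sP hl).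
move=> S1 S2; rewrite !inE => /and3P [s1 _ _] /and3P [s2 _ _] [/setP e _].
apply/setP => x; have := e x; have h1 := subsetP s1 x; have h2 := subsetP s2 x.
rewrite !inE in h1 h2 *.
case: (x \in S1) h1; case: (x \in S2) h2; case: (x \in Q) => //= h2 h1.
- by move: (h1 isT); rewrite negb_or andbF.
- by move: (h2 isT); rewrite negb_or andbF.
Qed.

Lemma admissible_swap12 (R : realFieldType) n (L : 'I_n -> R) (A B C : {set 'I_n}) :
  admissible3 L (B, A, C) = admissible3 L (A, B, C).
Proof. by rewrite /admissible3 andbCA. Qed.

Lemma admissible_swap23 (R : realFieldType) n (L : 'I_n -> R) (A B C : {set 'I_n}) :
  admissible3 L (A, C, B) = admissible3 L (A, B, C).
Proof. by rewrite /admissible3 (andbC (short L C)). Qed.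

Lemma admissible_cs (R : realFieldType) n (L : 'I_n -> R) (A B C : {set 'I_n}) :
  admissible3 L (B, C, A) = admissible3 L (A, B, C).
Proof. by rewrite /admissible3; case: (short L A); case: (short L B); case: (short L C). Qed.

Lemma Fs_swap12 (R : realFieldType) n (L : 'I_n -> R) (P Q : {set 'I_n}) :
  (#|Fs L P Q| <= #|Fs L Q P|)%N.
Proof.
rewrite -(@card_imset _ _ (fun t : triple n => (t.1.2, t.1.1, t.2))); last first.
  by move=> [[a b] c] [[a' b'] c'] /= [-> -> ->].
apply: subset_leq_card; apply/subsetP => t /imsetP [[[A B] C]].
rewrite inE => /and4P [h1 h2 h3 h4] ->; rewrite inE; apply/and4P; split.
- by rewrite part3_swap12.
- by rewrite admissible_swap12.
- exact: h4.
- exact: h3.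
Qed.

Lemma forcedB (R : realFieldType) n (L : 'I_n -> R) (P Q : {set 'I_n}) :
  positive_lengths L -> generic L -> Q != set0 -> [disjoint P & Q] -> short L Q ->
  (forall c, c \in ~: (P :|: Q) -> long L (c |: Q)) ->
  (2 ^ #|~: (P :|: Q)| - 2 <= #|Fs L P Q|)%N.
Proof.
move=> hp hg hQ dPQ sQ hl; apply: leq_trans (Fs_swap12 L Q P).
rewrite setUC; apply: forcedA => //; first by rewrite disjoint_sym.
by move=> c; rewrite setUC; exact: hl.
Qed.

Lemma compl_U1 n (P Q : {set 'I_n}) c :
  ~: ((c |: P) :|: Q) = ~: (P :|: Q) :\ c.
Proof. by apply/setP => x; rewrite !inE; case: (x == c); case: (x \in P); case: (x \in Q). Qed.

Lemma compl_U1r n (P Q : {set 'I_n}) c :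
  ~: (P :|: (c |: Q)) = ~: (P :|: Q) :\ c.
Proof. by rewrite setUC compl_U1 setUC. Qed.

Lemma setU1_neq0 n (c : 'I_n) (P : {set 'I_n}) : c |: P != set0.
Proof. by apply/set0Pn; exists c; rewrite !inE eqxx. Qed.

Lemma Fs_cA (R : realFieldType) n (L : 'I_n -> R) (P Q : {set 'I_n}) t :
  t \in Fs L P Q -> P \subset t.1.1.
Proof. by rewrite inE => /and4P []. Qed.

Lemma Fs_cB (R : realFieldType) n (L : 'I_n -> R) (P Q : {set 'I_n}) t :
  t \in Fs L P Q -> Q \subset t.1.2.
Proof. by rewrite inE => /and4P []. Qed.

Lemma Fs_p3 (R : realFieldType) n (L : 'I_n -> R) (P Q : {set 'I_n}) (t : triple n) :
  t \in Fs L P Q -> is_part3 t.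
Proof. by rewrite inE => /and4P []. Qed.

Lemma Fs_mono (R : realFieldType) n (L : 'I_n -> R) (P Q P' Q' : {set 'I_n}) :
  P \subset P' -> Q \subset Q' -> Fs L P' Q' \subset Fs L P Q.
Proof.
move=> h1 h2; apply/subsetP => t; rewrite !inE => /and4P [-> -> h3 h4] /=.
by rewrite (subset_trans h1 h3) (subset_trans h2 h4).
Qed.

Lemma Xbound (R : realFieldType) n (L : 'I_n -> R) :
  positive_lengths L -> strict_triangle L -> generic L ->
  forall k (P Q : {set 'I_n}), P != set0 -> Q != set0 -> [disjoint P & Q] ->
  short L P -> short L Q -> #|~: (P :|: Q)| = k.+1 -> (2 ^ k <= #|Fs L P Q|)%N.
Proof.
move=> hp ht hg; elim=> [|k IH] P Q hP hQ dPQ sP sQ hc.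
- have /cards1P [r hr] : #|~: (P :|: Q)| == 1%N by rewrite hc.
  rewrite expn0 card_gt0; apply/set0Pn; exists (P, Q, ~: (P :|: Q)).
  rewrite inE; apply/and4P; split; [ | | by rewrite /= subxx | by rewrite /= subxx].
  + rewrite part3E hP hQ hr /=; apply/andP; split; first by apply/set0Pn; exists r; rewrite inE.
    apply/forallP => x; rewrite -hr !inE.
    case xP: (x \in P); case xQ: (x \in Q) => //.
    by rewrite (disjointFr dPQ xP) in xQ.
  + by rewrite /admissible3 sP sQ hr short_set1.
- have hc' : #|~: (P :|: Q)| = k.+2 by [].
  case: (boolP [exists c, [&& c \in ~: (P :|: Q), short L (c |: P) & short L (c |: Q)]]).
  + case/existsP => c /and3P [cR sPc sQc].
    have cPQ := cR; rewrite !inE negb_or in cPQ; case/andP: cPQ => cP cQ.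
    have hc1 : #|~: (P :|: Q) :\ c| = k.+1.
      by move: hc; rewrite (cardsD1 c) cR add1n => [[]].
    have h1 := IH (c |: P) Q.
    rewrite compl_U1 in h1.
    have {}h1 := h1 (setU1_neq0 _ _) hQ _ sPc sQ hc1.
    have h2 := IH P (c |: Q).
    rewrite compl_U1r in h2.
    have {}h2 := h2 hP (setU1_neq0 _ _) _ sP sQc hc1.
    have d1 : [disjoint c |: P & Q].
      apply/disjointP => x; rewrite !inE => /orP [/eqP -> | xP] xQ.
      * by rewrite xQ in cQ.
      * by rewrite (disjointFr dPQ xP) in xQ.
    have d2 : [disjoint P & c |: Q].
      apply/disjointP => x; rewrite !inE => xP /orP [/eqP e | xQ].
      * by rewrite -e xP in cP.
      * by rewrite (disjointFr dPQ xP) in xQ.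
    have {d1}h1 := h1 d1; have {d2}h2 := h2 d2.
    apply: (@leq_trans #|Fs L (c |: P) Q :|: Fs L P (c |: Q)|).
    * rewrite cardsU.
      have -> : Fs L (c |: P) Q :&: Fs L P (c |: Q) = set0.
        apply/eqP; rewrite setI_eq0; apply/disjointP => t ht1 ht2.
        have := Fs_cA ht1; have := Fs_cB ht2; have := Fs_p3 ht1.
        case: t {ht1 ht2} => [[A B] C] /= p3 hB hA.
        have := part3_count c p3.
        have -> : c \in A by apply: (subsetP hA); rewrite !inE eqxx.
        have -> : c \in B by apply: (subsetP hB); rewrite !inE eqxx.
        by case: (c \in C).
      by rewrite cards0 subn0 expnS mul2n -addnn leq_add.
    * apply: subset_leq_card; rewrite subUset; apply/andP; split; apply: Fs_mono => //;
        exact: subsetUr.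
  + move/existsPn => hne.
    have hall : forall c, c \in ~: (P :|: Q) -> long L (c |: P) || long L (c |: Q).
      by move=> c cR; have := hne c; rewrite cR /= negb_and.
    have arith : (2 ^ k.+1 <= 2 ^ k.+2 - 2)%N.
      have : (0 < 2 ^ k)%N by rewrite expn_gt0.
      rewrite !expnS; move: (2 ^ k)%N => x hx; lia.
    case: (boolP [forall c, (c \in ~: (P :|: Q)) ==> long L (c |: P)]).
    * move/forallP => hA; apply: leq_trans (forcedA hp hg hP dPQ sP _); first by rewrite hc.
      by move=> c cR; have := hA c; rewrite cR.
    * case/forallPn => c0; rewrite negb_imply => /andP [c0R /negPn sc0].
      have lc0 : long L (c0 |: Q) by have := hall c0 c0R; rewrite /long sc0.
      have hB : forall d, d \in ~: (P :|: Q) -> long L (d |: Q).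
        move=> d dR; case: (boolP (long L (d |: Q))) => // /negPn sdQ.
        have ldP : long L (d |: P) by have := hall d dR; rewrite /long sdQ orbF.
        case: (eqVneq d c0) => [edc | ndc].
          by rewrite edc /long sc0 in ldP.
        exfalso; apply: (long_disj hp hg _ ldP lc0).
        apply/disjointP => x; rewrite !inE => /orP [/eqP -> | xP] /orP [/eqP e | xQ].
        - by rewrite e eqxx in ndc.
        - by move: dR; rewrite !inE xQ orbT.
        - by move: c0R; rewrite !inE -e xP.
        - by rewrite (disjointFr dPQ xP) in xQ.
      apply: leq_trans (forcedB hp hg hQ dPQ sQ hB); by rewrite hc.
Qed.

Lemma cardsU_disj (T : finType) (X Y : {set T}) :
  [disjoint X & Y] -> #|X :|: Y| = (#|X| + #|Y|)%N.
Proof. by move=> d; rewrite cardsU; move: d; rewrite -setI_eq0 => /eqP ->; rewrite cards0 subn0. Qed.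

Lemma part3_AB n (A B C : {set 'I_n}) c : is_part3 (A, B, C) -> c \in A -> c \in B -> False.
Proof. by move=> p h1 h2; have := part3_count c p; rewrite h1 h2; case: (c \in C). Qed.

Lemma part3_AC n (A B C : {set 'I_n}) c : is_part3 (A, B, C) -> c \in A -> c \in C -> False.
Proof. by move=> p h1 h2; have := part3_count c p; rewrite h1 h2; case: (c \in B). Qed.

Lemma part3_BC n (A B C : {set 'I_n}) c : is_part3 (A, B, C) -> c \in B -> c \in C -> False.
Proof. by move=> p h1 h2; have := part3_count c p; rewrite h1 h2; case: (c \in A). Qed.

Lemma set1_neq0 n (c : 'I_n) : [set c] != set0.
Proof. by apply/set0Pn; exists c; rewrite !inE eqxx. Qed.

Lemma Vbound (R : realFieldType) n (L : 'I_n -> R) :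
  positive_lengths L -> strict_triangle L -> generic L ->
  forall k (P : {set 'I_n}), P != set0 -> short L P -> #|~: P| = k ->
  (2 ^ k - 2 <= #|Fs L P set0|)%N.
Proof.
move=> hp ht hg; elim=> [|k IH] P hP sP hc; first by rewrite expn0.
case: (boolP [exists c, (c \in ~: P) && short L (c |: P)]).
- case/existsP => c /andP [cR sPc].
  case: k IH hc => [|j] IH hc; first by [].
  have e1 : ~: (c |: P) = ~: P :\ c.
    by apply/setP => x; rewrite !inE; case: (x == c); case: (x \in P).
  have e2 : ~: (P :|: [set c]) = ~: P :\ c.
    by apply/setP => x; rewrite !inE; case: (x == c); case: (x \in P).
  have hc1 : #|~: P :\ c| = j.+1.
    by move: hc; rewrite (cardsD1 c) cR add1n => [[]].
  have h1 := IH (c |: P) (setU1_neq0 _ _) sPc; rewrite e1 in h1.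
  have {}h1 := h1 hc1.
  have dPc : [disjoint P & [set c]].
    apply/disjointP => x xP; rewrite inE => /eqP e.
    by move: cR; rewrite inE -e xP.
  have h2 := Xbound hp ht hg (k := j) hP (set1_neq0 c) dPc sP (@short_set1 _ _ L c ht).
  rewrite e2 in h2; have {}h2 := h2 hc1.
  pose F3 := [set (t.1.1, t.2, t.1.2) | t in Fs L P [set c]].
  have cF3 : #|F3| = #|Fs L P [set c]|.
    by apply: card_imset => [[[a b] d]] [[a' b'] d'] /= [-> -> ->].
  have F3s : F3 \subset Fs L P set0.
    apply/subsetP => t /imsetP [[[A B] C]]; rewrite inE => /and4P [p a h3 _] ->.
    rewrite inE; apply/and4P; split => //.
    - by rewrite part3_swap23.
    - by rewrite admissible_swap23.
    - exact: sub0set.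
  have F3c : forall t, t \in F3 -> c \in t.2.
    move=> t /imsetP [[[A B] C]]; rewrite inE => /and4P [_ _ _ h] -> /=.
    by rewrite -sub1set.
  have -> : (2 ^ j.+2 - 2 = (2 ^ j.+1 - 2) + 2 ^ j + 2 ^ j)%N.
    have : (0 < 2 ^ j)%N by rewrite expn_gt0.
    rewrite !expnS; move: (2 ^ j)%N => x hx; lia.
  apply: (@leq_trans #|Fs L (c |: P) set0 :|: Fs L P [set c] :|: F3|); last first.
    apply: subset_leq_card; rewrite !subUset F3s andbT; apply/andP; split; apply: Fs_mono => //.
    + exact: subsetUr.
    + exact: sub0set.
  rewrite cardsU_disj; last first.
    apply/disjointP => t; rewrite inE => /orP [] ht1 ht3; have := F3c t ht3;
      have := Fs_p3 (subsetP F3s t ht3); case: t ht1 ht3 => [[A B] C] ht1 _ /= p cC.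
    + by apply: (part3_AC p _ cC); apply: (subsetP (Fs_cA ht1)); rewrite !inE eqxx.
    + by apply: (part3_BC p _ cC); rewrite -sub1set; exact: (Fs_cB ht1).
  rewrite cardsU_disj; last first.
    apply/disjointP => t ht1 ht2; have := Fs_p3 ht1.
    case: t ht1 ht2 => [[A B] C] ht1 ht2 p.
    apply: (part3_AB (c := c) p).
    + by apply: (subsetP (Fs_cA ht1)); rewrite !inE eqxx.
    + by rewrite -sub1set; exact: (Fs_cB ht2).
  by rewrite cF3; apply: leq_add => //; apply: leq_add.
- move/existsPn => hne.
  have d0 : [disjoint P & set0] by apply/disjointP => x _; rewrite inE.
  have := forcedA hp hg hP d0 sP; rewrite setU0 hc; apply.
  by move=> c cR; have := hne c; rewrite cR.
Qed.

Lemma cyc_cs n (t : triple n) : cyc_class (cshift t) = cyc_class t.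
Proof.
case: t => [[A B] C]; rewrite /cyc_class /cshift /=; apply/setP => x; rewrite !inE.
by case: (x == (A, B, C)); case: (x == (B, C, A)); case: (x == (C, A, B)).
Qed.

Lemma Gamma_card (R : realFieldType) n (L : 'I_n -> R) (a : 'I_n) :
  #|Gamma_vertices L| = #|Fs L [set a] set0|.
Proof.
have -> : Gamma_vertices L = [set cyc_class t | t in Fs L [set a] set0].
  apply/eqP; rewrite eqEsubset; apply/andP; split.
  - apply/subsetP => X /imsetP [t]; rewrite inE => /andP [p ad] ->.
    case: t p ad => [[A B] C] p ad.
    have := part3_count a p.
    case aA: (a \in A); case aB: (a \in B); case aC: (a \in C) => // _.
    + by apply/imsetP; exists (A, B, C); rewrite // inE p ad sub1set aA sub0set.
    + by apply/imsetP; exists (B, C, A);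
        [rewrite inE part3_cs admissible_cs p ad sub1set aB sub0set | exact: (esym (cyc_cs (A, B, C)))].
    + by apply/imsetP; exists (C, A, B);
        [rewrite inE -part3_cs -admissible_cs p ad sub1set aC sub0set | exact: (cyc_cs (C, A, B))].
  - by apply: imsetS; apply/subsetP => t; rewrite !inE => /and4P [-> -> _ _].
rewrite card_in_imset //.
move=> t1 t2 h1 h2 e.
have : t1 \in cyc_class t2 by rewrite -e /cyc_class !inE eqxx.
have aA1 : a \in t1.1.1 by rewrite -sub1set; exact: (Fs_cA h1).
have p1 := Fs_p3 h1.
case: t2 h2 e => [[A B] C] h2 _.
have aA : a \in A by rewrite -sub1set; exact: (Fs_cA h2).
have p2 := Fs_p3 h2.
rewrite /cyc_class /cshift /= !inE => /orP [/orP [/eqP -> // | /eqP et] | /eqP et].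
- by rewrite et /= in aA1; case: (part3_AB p2 aA aA1).
- by rewrite et /= in aA1; case: (part3_AC p2 aA aA1).
Qed.

Lemma card_compl1 n (a : 'I_n) : #|~: ([set a] :|: set0)| = n.-1.
Proof.
rewrite setU0; have := cardsC [set a]; rewrite cards1 card_ord add1n => h.
exact: (congr1 predn h).
Qed.

Lemma bow_card (R : realFieldType) n (L : 'I_n -> R) (a : 'I_n) :
  positive_lengths L -> generic L -> strict_triangle L ->
  (forall c, c != a -> long L [set c; a]) ->
  #|Fs L [set a] set0| = (2 ^ n.-1 - 2)%N.
Proof.
move=> hp hg ht hb.
have d0 : [disjoint [set a] & set0] by apply/disjointP => x _; rewrite inE.
have hl : forall c, c \in ~: ([set a] :|: set0) -> long L (c |: [set a]).
  by move=> c; rewrite setU0 !inE => /hb.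
apply/eqP; rewrite eqn_leq; apply/andP; split; last first.
  by have := forcedA hp hg (set1_neq0 a) d0 (@short_set1 _ _ L a ht) hl; rewrite card_compl1.
rewrite -(card_compl1 a) -card_Dset.
apply: leq_trans (leq_imset_card
   (fun S => ([set a], set0 :|: S, ~: ([set a] :|: set0) :\: S)) _).
apply: subset_leq_card; apply/subsetP => t ht1.
have p := Fs_p3 ht1; have sA := Fs_cA ht1.
move: ht1; rewrite inE => /and4P [_ ad _ _].
case: t p sA ad => [[A B] C] p sA ad /=.
move: ad; rewrite /admissible3 => /and3P [shA shB shC].
rewrite /= sub1set in sA.
have eA : A = [set a].
  apply/setP => x; rewrite inE; case: (eqVneq x a) => [-> // | xa].
  apply/negP => xA; have := hb x xa; rewrite /long; apply/negP/negPn.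
  apply: (short_sub hp _ shA); apply/subsetP => y; rewrite !inE.
  by case/orP => /eqP ->.
subst A.
have pc := part3_count _ p.
apply/imsetP; exists B.
- rewrite inE; apply/and3P; split.
  + apply/subsetP => x xB; rewrite !inE orbF; apply/negP => /eqP xa.
    by have := pc x; rewrite xB xa !inE eqxx.
  + by move: p; rewrite part3E => /and4P [_ -> _ _].
  + apply/negP => /eqP eB.
    move: p; rewrite part3E => /and4P [_ _ /set0Pn [x xC] _].
    have := pc x; rewrite xC.
    have : x \in ~: ([set a] :|: set0).
      rewrite !inE orbF; apply/negP => /eqP xa.
      by move: xC; rewrite xa => aC; have := pc a; rewrite !inE eqxx aC; case: (a \in B).
    by rewrite -eB => xB; rewrite xB; case: (x \in [set a]).
- rewrite set0U; congr (_, _, _); apply/setP => x; rewrite !inE orbF.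
  have := pc x; rewrite inE.
  by case: (x == a); case: (x \in B); case: (x \in C).
Qed.

Local Close Scope ring_scope.

Theorem mainTheorem2 (R : realFieldType) (n : nat) (L : 'I_n -> R) :
  (4 <= n)%N ->
  positive_lengths L -> strict_triangle L -> generic L -> is_bow L ->
  #|Gamma_vertices L| = (2 ^ n.-1 - 2)%N /\
  (forall L' : 'I_n -> R,
     positive_lengths L' -> strict_triangle L' -> generic L' ->
     (2 ^ n.-1 - 2 <= #|Gamma_vertices L'|)%N).
Proof.
move=> h4 hp ht hg hb.
have hn : (n.-1 < n)%N by rewrite ltn_predL; apply: leq_trans h4.
pose a : 'I_n := Ordinal hn.
split.
- rewrite (Gamma_card L a); apply: bow_card => // c ca.
  exact: hb.
- move=> L' hp' ht' hg'; rewrite (Gamma_card L' a).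
  apply: (Vbound hp' ht' hg' (set1_neq0 a) (@short_set1 _ _ L' a ht')).
  by have := card_compl1 a; rewrite setU0.
Qed.
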